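(* Let $(\mathrm{Block},\mathrm{Gd},\mathrm{Bd})$ be a critical tuple given as input to the Gap algorithm, let $i\in\mathbb{Z}$ with $\mathrm{Block}(i)\neq\emptyset$, and let $P$ be the set of selected elements at any stage of an arbitrary execution of the Gap algorithm. If $e\in B_{\mathcal{U}\setminus F}(\mathrm{Block}(i))\cap\mathrm{span}(B_F(\mathrm{Gd}(i)))$, then $$e\notin\mathrm{span}\big(P\cup B_F(\mathrm{Bd}(i))\big)\iff e\notin\mathrm{span}\Big(\big(P\cap B_{\mathcal{U}\setminus F}(\mathrm{Block}(i))\big)\cup B_F(\mathrm{Bd}(i))\Big).$$
   Context: $M=(\mathcal{U},\mathcal{I})$ is a matroid; $\mathrm{rank}(X)=\max\{|X'|:X'\subseteq X,X'\in\mathcal{I}\}$, $\mathrm{span}(X)=\{e:\mathrm{rank}(X\cup\{e\})=\mathrm{rank}(X)\}$. Standing assumption: elements of rank $0$ have value $0$ and every element of positive value has value $2^i$ for some $i\in\mathbb{Z}$. For $X\subseteq\mathcal{U}$: $B_X(i)=\{e\in X:\mathrm{val}(e)=2^i\}$, $B_X(I)=\bigcup_{i\in I}B_X(i)$. Logarithms base 2. $F\subseteq\mathcal{U}$ is the set of elements revealed in a first (observation) stage; afterwards the elements of $\mathcal{U}\setminus F$ are revealed one by one. Critical tuple: $(\mathrm{Block},\mathrm{Gd},\mathrm{Bd})$ where $\mathrm{Block},\mathrm{Gd},\mathrm{Bd}$ are maps from $\mathbb{Z}$ to subsets of $\mathbb{Z}$ such that for all $i\ge j$ with $\mathrm{Block}(i),\mathrm{Block}(j)$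 nonempty: (1) $i\in\mathrm{Block}(i)$; (2) if $i>j$ then either $\mathrm{Block}(i)=\mathrm{Block}(j)$ or $\min\mathrm{Block}(i)>\max\mathrm{Block}(j)$; (3) if $\mathrm{Block}(i)=\mathrm{Block}(j)$ then $\mathrm{Gd}(i)=\mathrm{Gd}(j)$ and $\mathrm{Bd}(i)=\mathrm{Bd}(j)$; (4) $\mathrm{Block}(i)\cup\mathrm{Bd}(i)\subseteq\mathrm{Gd}(i)$; (5) if $\min\mathrm{Block}(i)>\max\mathrm{Block}(j)$ then $\mathrm{Bd}(i)\subseteq\mathrm{Gd}(i)\subseteq\mathrm{Bd}(j)\subseteq\mathrm{Gd}(j)$; (6) $\max\mathrm{Block}(i)<\min\mathrm{Bd}(i)$. Gap algorithm with input a critical tuple: start with $P=\emptyset$; immediately after each $e\in\mathcal{U}\setminus F$ is revealed (elements of value $0$ are ignored), let $\ell=\log\mathrm{val}(e)$; if $\mathrm{Block}(\ell)\neq\emptyset$, $e\in\mathrm{span}(B_F(\mathrm{Gd}(\ell)))$ and $e\notin\mathrm{span}(P\cup B_F(\mathrm{Bd}(\ell)))$, then add $e$ to $P$. Output $P$. *)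

(* Defs.v *)
From mathcomp Require Import all_boot all_order all_algebra.
From mathcomp Require Import boolp.
Set Implicit Arguments. Unset Strict Implicit. Unset Printing Implicit Defensive.
Import Order.TTheory GRing.Theory Num.Theory.

Section Defs.
Variable T : finType.

(* Matroid given by its family of independent sets (ground set U = T). *)
Definition matroid (indep : {set T} -> bool) : Prop :=
  [/\ indep set0,
      (forall A B : {set T}, B \subset A -> indep A -> indep B) &
      (forall A B : {set T}, indep A -> indep B -> #|A| < #|B| ->
         exists2 x, x \in B :\: A & indep (x |: A))].

Definition mrank (indep : {set T} -> bool) (X : {set T}) : nat :=
  \max_(Y : {set T} | (Y \subset X) && indep Y) #|Y|.

Definition mspan (indep : {set T} -> bool) (X : {set T}) : {set T} :=
  [set x | mrank indep (x |: X) == mrank indep X].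

(* Values: lvl e = None  <->  val e = 0;  lvl e = Some k  <->  val e = 2^k.
   This encodes the standing assumption on values. *)
Definition val (R : numFieldType) (lvl : T -> option int) (e : T) : R :=
  if lvl e is Some k then (2%:R : R) ^ k else 0.

(* B_X(I) = { e in X : val e = 2^k for some k in I } *)
Definition Bset (lvl : T -> option int) (X : {set T}) (I : pred int) : {set T} :=
  [set e in X | if lvl e is Some k then I k else false].

End Defs.

(* Critical tuple; subsets of Z are boolean predicates on int.
   "min A > max B" is rendered as: every element of A exceeds every element of B. *)
Definition nonempty (A : pred int) : Prop := exists x, A x.

Definition critical_tuple (Block Gd Bd : int -> pred int) : Prop :=
  forall i j : int, (j <= i)%R -> nonempty (Block i) -> nonempty (Block j) ->
  (Block i i /\ (forall x, Block i x || Bd i x -> Gd i x)) /\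
  [/\ ((j < i)%R -> (Block i =1 Block j) \/
                    (forall a b, Block i a -> Block j b -> (b < a)%R)),
      (Block i =1 Block j -> Gd i =1 Gd j /\ Bd i =1 Bd j),
      ((forall a b, Block i a -> Block j b -> (b < a)%R) ->
         [/\ (forall x, Bd i x -> Gd i x), (forall x, Gd i x -> Bd j x)
           & (forall x, Bd j x -> Gd j x)]) &
      (forall a b, Block i a -> Bd i b -> (a < b)%R)].

Definition gap_step (T : finType) (indep : {set T} -> bool) (lvl : T -> option int)
  (F : {set T}) (Block Gd Bd : int -> pred int) (P : {set T}) (e : T) : {set T} :=
  if lvl e is Some l then
    if [&& `[< nonempty (Block l) >],
           e \in mspan indep (Bset lvl F (Gd l)) &
           e \notin mspan indep (P :|: Bset lvl F (Bd l))]
    then e |: P else P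
  else P.

Definition gap (T : finType) (indep : {set T} -> bool) (lvl : T -> option int)
  (F : {set T}) (Block Gd Bd : int -> pred int) (s : seq T) : {set T} :=
  foldl (gap_step indep lvl F Block Gd Bd) set0 s.

(* Main.v *)
Require Import Defs.
From mathcomp Require Import all_boot all_order all_algebra.
From mathcomp Require Import boolp.
Import Order.TTheory GRing.Theory Num.Theory.
Section M.
Variable T : finType.
Variable indep : {set T} -> bool.
Hypothesis Hm : matroid indep.
Set Implicit Arguments.
Local Notation r := (mrank indep).
Local Notation cl := (mspan indep).
Implicit Types (X Y Z I J A B : {set T}) (x y e f : T).

Lemma i0 : indep set0. Proof. by case: Hm. Qed.
Lemma isub (A B : {set T}) : B \subset A -> indep A -> indep B. Proof. by case: Hm => _ H _; apply: H. Qed.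
Lemma iaug (A B : {set T}) :  indep A -> indep B -> #|A| < #|B| ->
         exists2 x, x \in B :\: A & indep (x |: A). Proof. by case: Hm => _ _ H; apply: H. Qed.

Lemma rank_ge X Y : Y \subset X -> indep Y -> #|Y| <= r X.
Proof. by move=> sYX iY; apply: (bigop.leq_bigmax_cond Y); rewrite sYX iY. Qed.

Lemma rank_wit X : exists Y, [/\ Y \subset X, indep Y & #|Y| = r X].
Proof.
rewrite /mrank (bigop.bigmax_eq_arg set0) ?sub0set ?i0 //.
by case: arg_maxnP => [|Y /andP[? ?] _]; [rewrite sub0set i0 | exists Y].
Qed.

Lemma rank_mono X Y : X \subset Y -> r X <= r Y.
Proof.
move=> sXY; apply/bigop.bigmax_leqP => Z /andP[sZX iZ].
by apply: rank_ge => //; apply: subset_trans sXY.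
Qed.

Lemma rankU1 x X : r (x |: X) <= (r X).+1.
Proof.
have [Y [sY iY <-]] := rank_wit (x |: X).
rewrite (cardsD1 x Y) -(addn1 (r X)) addnC.
apply: leq_add; last by case: (x \in Y).
apply: rank_ge; last by apply: isub iY; apply: subD1set.
apply/subsetP => y; rewrite !inE => /andP[yx yY].
by move/subsetP: sY => /(_ y yY); rewrite !inE (negbTE yx).
Qed.

Lemma raug I X : I \subset X -> indep I -> #|I| < r X ->
  exists2 y, y \in X :\: I & indep (y |: I).
Proof.
move=> sIX iI lt; have [Y [sY iY eY]] := rank_wit X.
have lt' : #|I| < #|Y| by rewrite eY.
have [y] := iaug iI iY lt'.
rewrite !inE => /andP[yI yY] iy; exists y => //.
by rewrite !inE yI (subsetP sY).
Qed.

Lemma extend I X : I \subset X -> indep I ->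
  exists J, [/\ I \subset J, J \subset X, indep J & #|J| = r X].
Proof.
move=> sIX iI; move: {2}(r X - #|I|) (erefl (r X - #|I|)) => k.
elim: k I sIX iI => [|k IH] I sIX iI hk.
  exists I; split => //; apply/eqP; rewrite eqn_leq rank_ge //.
  by move/eqP: hk; rewrite subn_eq0.
have lt : #|I| < r X by rewrite -subn_gt0 hk.
have [y] := raug sIX iI lt; rewrite !inE => /andP[yI yX] iy.
have [J [s1 s2 s3 s4]] : exists J, [/\ y |: I \subset J, J \subset X, indep J & #|J| = r X].
  apply: IH => //.
    by apply/subsetP => z; rewrite !inE => /orP[/eqP->|/(subsetP sIX)].
  by rewrite cardsU1 yI add1n subnS hk.
exists J; split => //; apply: subset_trans s1; exact: subsetU1.
Qed.

Lemma mem_span x X : x \in X -> x \in cl X.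
Proof. by move=> xX; rewrite inE (setUidPr _) // sub1set. Qed.

Lemma notspan_basis x X J : J \subset X -> indep J -> #|J| = r X ->
  x \notin cl X -> indep (x |: J) /\ x \notin J.
Proof.
move=> sJX iJ eJ; rewrite inE => ne.
have lt : #|J| < r (x |: X).
  by rewrite eJ ltn_neqAle eq_sym ne rank_mono // subsetU1.
have [y] := raug (subset_trans sJX (subsetU1 x X)) iJ lt.
rewrite !inE => /andP[yJ yXx] iy; case/orP: yXx => [/eqP eyx|yX]; first by rewrite -eyx; split.
have sJ : y |: J \subset X.
  by apply/subsetP => z; rewrite !inE => /orP[/eqP->|/(subsetP sJX)].
by have := rank_ge sJ iy; rewrite cardsU1 yJ add1n eJ ltnn.
Qed.

Lemma span_mono x Y Z : Y \subset Z -> x \in cl Y -> x \in cl Z.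
Proof.
move=> sYZ xY; apply/negPn/negP => xZ.
have [I [sIY iI eI]] := rank_wit Y.
have [J [sIJ sJZ iJ eJ]] := extend (subset_trans sIY sYZ) iI.
have [iJx xJ] := notspan_basis x sJZ iJ eJ xZ.
have xI : x \notin I by apply: contra xJ; apply: (subsetP sIJ).
have iIx : indep (x |: I) by apply: isub iJx; apply: setUS.
have sI : x |: I \subset x |: Y by apply: setUS.
have := rank_ge sI iIx; rewrite cardsU1 xI add1n eI.
by move: xY; rewrite inE => /eqP->; rewrite ltnn.
Qed.

Lemma rank_spanU Y Z : Y \subset cl Z -> r (Z :|: Y) = r Z.
Proof.
move=> sY; apply/eqP; rewrite eqn_leq [r Z <= _]rank_mono ?subsetUl // andbT.
have [J [sJZ iJ eJ]] := rank_wit Z; rewrite leqNgt -eJ; apply/negP => lt.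
have [y] := raug (subset_trans sJZ (subsetUl Z Y)) iJ lt.
rewrite !inE => /andP[yJ yZY] iy.
have yc : y \in cl Z by case/orP: yZY => [/mem_span|/(subsetP sY)].
have sJ : y |: J \subset y |: Z by apply: setUS.
have := rank_ge sJ iy; rewrite cardsU1 yJ add1n eJ.
by move: yc; rewrite inE => /eqP->; rewrite ltnn.
Qed.

Lemma span_sub x Y Z : Y \subset cl Z -> x \in cl Y -> x \in cl Z.
Proof.
move=> sY /(span_mono (subsetUr Z Y)); rewrite !inE (rank_spanU sY) => /eqP e.
rewrite eqn_leq [r Z <= _]rank_mono ?subsetU1 // andbT -e rank_mono //.
by apply: setUS; apply: subsetUl.
Qed.

Lemma exchange e f Y : e \notin cl Y -> e \in cl (f |: Y) -> f \in cl (e |: Y).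
Proof.
rewrite !inE => ne /eqP h.
have h1 : r (e |: Y) = (r Y).+1.
  apply/eqP; rewrite eqn_leq rankU1 /= ltn_neqAle eq_sym ne rank_mono //; exact: subsetU1.
have h2 : r (f |: Y) = (r Y).+1.
  apply/eqP; rewrite eqn_leq rankU1 /= -h1 -h rank_mono //.
  by rewrite setUCA; apply: subsetU1.
by rewrite setUCA h h1 h2.
Qed.

End M.

Section S.
Variable T : finType.
Implicit Types (P X Y B C G : {set T}) (x e : T).

Lemma s1 x P B X : (x|:P) :|: B :|: X \subset P :|: B :|: (x |: X).
Proof. by apply/subsetP => y; rewrite !inE; case: (y == x); rewrite ?orbT. Qed.

Lemma s2 x P C B X : x \in C -> (P :&: C) :|: B :|: (x|:X) \subset ((x|:P) :&: C) :|: B :|: X.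
Proof.
move=> xC; apply/subsetP => y; rewrite !inE; case: eqP => [->|]; rewrite ?xC ?orbT //=.
Qed.

Lemma s3 x P C : x \notin C -> (x|:P) :&: C = P :&: C.
Proof.
move=> xC; apply/setP => y; rewrite !inE; case: eqP => [->|] //=.
by rewrite (negbTE xC) !andbF.
Qed.

Lemma s4 x P B X : (x|:P) :|: B :|: X = x |: (P :|: B :|: X).
Proof. by rewrite -!setUA. Qed.

End S.
Arguments s1 {T}. Arguments s2 {T}. Arguments s3 {T}. Arguments s4 {T}.

Lemma Bset_sub (T : finType) (lvl : T -> option int) F (I J : pred int) :
  (forall k, I k -> J k) -> Bset lvl F I \subset Bset lvl F J.
Proof.
move=> h; apply/subsetP => y; rewrite !inE => /andP[-> ]; case: (lvl y) => // k; exact: h.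
Qed.

Lemma Bset_eq (T : finType) (lvl : T -> option int) F (I J : pred int) :
  I =1 J -> Bset lvl F I = Bset lvl F J.
Proof. by move=> h; apply/setP => y; rewrite !inE; case: (lvl y) => // k; rewrite h. Qed.

Arguments Bset_sub {T} lvl F {I J}. Arguments Bset_eq {T} lvl F {I J}.

Lemma classify (Block Gd Bd : int -> pred int) i l : critical_tuple Block Gd Bd ->
  nonempty (Block i) -> nonempty (Block l) ->
 [\/ Block i l /\ Gd l =1 Gd i,
     ~~ Block i l /\ (forall k, Gd l k -> Bd i k) |
     [/\ ~~ Block i l, (forall k, Gd i k -> Bd l k) & (forall k, Bd i k -> Gd i k)]].
Proof.
move=> H ni nl.
have [[Bll _] _] := H l l (lexx l) nl nl.
have [[Bii Hii] _] := H i i (lexx i) ni ni.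
case: (ltgtP l i) => [lt|gt|->]; last by constructor 1.
- have [_ [c2 c3 c5 _]] := H i l (ltW lt) ni nl.
  case: (c2 lt) => [eq|sep].
    constructor 1; split; first by rewrite eq.
    by move=> k; case: (c3 eq) => g _; rewrite g.
  have [h1 h2 h3] := c5 sep; constructor 3; split => //.
    by apply/negP => Bil; have := sep l l Bil Bll; rewrite ltxx.
- have [_ [c2 c3 c5 _]] := H l i (ltW gt) nl ni.
  case: (c2 gt) => [eq|sep].
    constructor 1; split; first by rewrite -eq.
    by move=> k; case: (c3 eq) => g _; rewrite g.
  have [h1 h2 h3] := c5 sep; constructor 2; split => //.
  by apply/negP => Bil; have := sep l l Bll Bil; rewrite ltxx.
Qed.

Section Main.
Variables (T : finType) (indep : {set T} -> bool) (lvl : T -> option int)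
  (F : {set T}) (Block Gd Bd : int -> pred int) (i : int).
Hypothesis Hm : matroid indep.
Hypothesis Hc : critical_tuple Block Gd Bd.
Hypothesis Hni : nonempty (Block i).
Local Notation cl := (mspan indep).
Local Notation G := (Bset lvl F (Gd i)).
Local Notation B := (Bset lvl F (Bd i)).
Local Notation C := (Bset lvl (~: F) (Block i)).

Definition Inv (P : {set T}) := forall (X : {set T}) e, X \subset cl G -> e \in cl G ->
  e \in cl (P :|: B :|: X) -> e \in cl ((P :&: C) :|: B :|: X).

Lemma Inv0 : Inv set0.
Proof. by move=> X e _ _; rewrite set0I. Qed.

Lemma Inv_step P x : x \notin F -> Inv P -> Inv (gap_step indep lvl F Block Gd Bd P x).
Proof.
move=> xF IH; rewrite /gap_step.
case Hl: (lvl x) => [l|] //.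
case: ifP => // /and3P[/asboolP nl xG xB] X e sX eG.
have [[Bil eGd]|[nBil hGB]|[nBil hGB hBG]] := classify i l Hc Hni nl.
- have xC : x \in C by rewrite !inE xF Hl.
  have xGi : x \in cl G by rewrite -(Bset_eq lvl F eGd).
  move=> h; apply: (span_mono Hm (s2 _ _ _ _ _ xC)).
  apply: IH => //.
    by apply/subsetP => y; rewrite in_setU1 => /orP[/eqP->|/(subsetP sX)].
  exact: (span_mono Hm (s1 _ _ _ _)).
- have xC : x \notin C by rewrite !inE Hl negb_and nBil orbT.
  rewrite s3 // => h; apply: IH => //.
  apply: (span_sub Hm _ h); apply/subsetP => y; rewrite s4 in_setU1 => /orP[/eqP->|yY].
    apply: (span_mono Hm _ xG); apply: (subset_trans (Bset_sub lvl F hGB)).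
    by rewrite -setUA setUCA; apply: subsetUl.
  exact: mem_span.
- have xC : x \notin C by rewrite !inE Hl negb_and nBil orbT.
  rewrite s3 // s4 => h; apply: IH => //.
  apply/negPn/negP => eY.
  have := exchange Hm eY h => xe.
  move/negP: xB; apply; apply: (span_sub Hm _ xe).
  have sGW : G \subset P :|: Bset lvl F (Bd l).
    apply: subset_trans (subsetUr _ _); exact: Bset_sub.
  apply/subsetP => y; rewrite in_setU1 => /orP[/eqP->|].
    exact: (span_mono Hm sGW).
  rewrite !in_setU => /orP[/orP[yP|yB]|yX].
  + by apply: mem_span; rewrite in_setU yP.
  + apply: mem_span; apply: (subsetP sGW).
    by move: yB; apply/subsetP; apply: Bset_sub.
  + by apply: (span_mono Hm sGW); apply: (subsetP sX).
Qed.

Lemma Inv_fold s P : all (fun x => x \notin F) s -> Inv P ->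
  Inv (foldl (gap_step indep lvl F Block Gd Bd) P s).
Proof.
elim: s P => [|x s IHs] P //= /andP[xF sF] IP.
by apply: IHs => //; apply: Inv_step.
Qed.

End Main.

Theorem lemma2 (T : finType) (indep : {set T} -> bool) (lvl : T -> option int)
  (F : {set T}) (Block Gd Bd : int -> pred int) (order : seq T) (n : nat)
  (i : int) (e : T) :
  matroid indep ->
  (forall x : T, mrank indep [set x] = 0%N -> lvl x = None) ->
  critical_tuple Block Gd Bd ->
  uniq order -> (forall x : T, (x \in order) = (x \notin F)) ->
  nonempty (Block i) ->
  e \in Bset lvl (~: F) (Block i) :&: mspan indep (Bset lvl F (Gd i)) ->
  let P := gap indep lvl F Block Gd Bd (take n order) in
  (e \notin mspan indep (P :|: Bset lvl F (Bd i))) =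
  (e \notin mspan indep ((P :&: Bset lvl (~: F) (Block i)) :|: Bset lvl F (Bd i))).
Proof.
move=> Hm _ Hc _ Hord Hni; rewrite inE => /andP[_ eG] P.
have IP : Inv indep lvl F Block Gd Bd i P.
  apply: Inv_fold => //; last exact: Inv0.
  by apply/allP => x /mem_take; rewrite Hord.
congr (~~ _); apply/idP/idP => h.
  have := IP set0 e (sub0set _) eG; rewrite !setU0; exact.
by apply: (span_mono Hm _ h); apply: setSU; apply: subsetIl.
Qed.
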